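(* Let $X$ be a nonnegative integer-valued random variable whose PGF $X(z)$ has radius of convergence $r>1$, with mean $\mu=X'(1)>0$ and variance $\sigma^2>0$, such that $|X(z)|<X(r_1)$ whenever $|z|=r_1$, $z\ne r_1$, $r_1\in(0,r)$. For positive integers $n,s$ let $A(z)=X(z)^n$, $\mu_A=n\mu<s$, with degree of $X(z)$ larger than $s/n$, and let $Z_0$ be the zero of $z^s-A(z)$ of minimal modulus in $1<|z|<r$. Suppose $\frac{n\mu}{s}=1-\frac{\gamma}{\sqrt s}$ with $\gamma$ bounded away from $0$ and $\infty$ as $s\to\infty$. Then $$-\frac{s-\mu_A}{sZ_0^{s-1}-A'(Z_0)}=\Big(\frac{1}{Z_0}\Big)^{s-1}\big(1+O(s^{-1/2})\big),\qquad s\to\infty.$$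
   Context: $\sigma^2=X''(1)-X'(1)^2+X'(1)$. $O$-terms refer to $s\to\infty$ with constants independent of $s$. *)

(* Defs.v *)
From Stdlib Require Import Reals.
From Coquelicot Require Import Coquelicot.
Open Scope R_scope.

Definition is_pmf (p : nat -> R) : Prop :=
  (forall k, 0 <= p k) /\ is_series p 1.

(* Complex value of the PGF  X(z) = sum_k p_k z^k  (real and imaginary parts
   summed separately; meaningful inside the disc of convergence). *)
Definition pgf (p : nat -> R) (z : C) : C :=
  (Series (fun k => p k * fst (Cpow z k)), Series (fun k => p k * snd (Cpow z k))).

Definition pgf_deriv (p : nat -> R) (z : C) : C :=
  (Series (fun k => INR (S k) * p (S k) * fst (Cpow z k)),
   Series (fun k => INR (S k) * p (S k) * snd (Cpow z k))).

Definition pgfR (p : nat -> R) (x : R) : R := Series (fun k => p k * x ^ k).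

Definition pgf_mean (p : nat -> R) : R := Series (fun k => INR k * p k).

Definition pgf_var (p : nat -> R) : R :=
  Series (fun k => INR k * (INR k - 1) * p k) - pgf_mean p ^ 2 + pgf_mean p.

(* "degree of X(z) larger than t": some k > t with p_k > 0 (degree may be infinite) *)
Definition pgf_deg_gt (p : nat -> R) (t : R) : Prop :=
  exists k : nat, 0 < p k /\ t < INR k.

(* Main.v *)
Require Import Defs.
From Stdlib Require Import Reals Lra Psatz Classical.
From Coquelicot Require Import Coquelicot.
Open Scope R_scope.

Lemma in_rad (b : nat -> R) (x rho : R) :
  0 <= x <= rho -> Rbar_lt rho (CV_radius b) -> Rbar_lt (Rabs x) (CV_radius b).
Proof.
  intros Hx Hr. rewrite Rabs_pos_eq by lra.
  eapply Rbar_le_lt_trans; [|exact Hr]. simpl; lra.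
Qed.

Lemma ps_ex (a : nat -> R) x : Rbar_lt (Rabs x) (CV_radius a) ->
  ex_series (fun k => a k * x ^ k).
Proof. intros H. apply ex_series_Rabs, CV_disk_inside, H. Qed.

Lemma Series_zero (a : nat -> R) : (forall k, a k = 0) -> Series a = 0.
Proof.
  intros H. rewrite (Series_ext a (fun k => 0 * a k)).
  rewrite Series_scal_l; ring. intros k; rewrite H; ring.
Qed.

Lemma ps_mono (a : nat -> R) x y : (forall k, 0 <= a k) -> 0 <= x <= y ->
  Rbar_lt (Rabs y) (CV_radius a) -> 0 <= PSeries a x <= PSeries a y.
Proof.
  intros Ha Hxy Hy. unfold PSeries. split.
  - rewrite <- (Series_zero (fun _ => 0)) by auto.
    apply Series_le.
    + intros k. split; [lra|]. apply Rmult_le_pos; [apply Ha| apply pow_le; lra].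
    + apply ps_ex. eapply Rbar_le_lt_trans; [|exact Hy].
      simpl. rewrite !Rabs_pos_eq; lra.
  - apply Series_le. intros k. split.
    + apply Rmult_le_pos; [apply Ha| apply pow_le; lra].
    + apply Rmult_le_compat_l; [apply Ha|]. apply pow_incr; lra.
    + apply ps_ex, Hy.
Qed.

Lemma PSd_nonneg (a : nat -> R) : (forall k, 0 <= a k) -> forall k, 0 <= PS_derive a k.
Proof. intros H k. unfold PS_derive. apply Rmult_le_pos; [apply pos_INR|apply H]. Qed.

Lemma mean_eq (p : nat -> R) : Rbar_lt 1 (CV_radius p) ->
  Series (fun k => INR k * p k) = PSeries (PS_derive p) 1.
Proof.
  intros Hr.
  assert (Hr' : Rbar_lt (Rabs 1) (CV_radius (PS_derive p))).
  { rewrite CV_radius_derive, Rabs_R1; exact Hr. }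
  pose proof (ps_ex _ _ Hr') as Hex.
  unfold PSeries, PS_derive.
  rewrite Series_incr_1.
  - simpl (INR 0). rewrite Rmult_0_l, Rplus_0_l. apply Series_ext.
    intros k. rewrite pow1. ring.
  - apply ex_series_incr_1.
    eapply ex_series_ext; [|exact Hex]. intros k; unfold PS_derive; simpl.
    rewrite pow1; ring.
Qed.

Lemma var_eq (p : nat -> R) : Rbar_lt 1 (CV_radius p) ->
  Series (fun k => INR k * (INR k - 1) * p k) = PSeries (PS_derive (PS_derive p)) 1.
Proof.
  intros Hr.
  assert (Hr' : Rbar_lt (Rabs 1) (CV_radius (PS_derive (PS_derive p)))).
  { rewrite !CV_radius_derive, Rabs_R1; exact Hr. }
  pose proof (ps_ex _ _ Hr') as Hex.
  unfold PSeries, PS_derive.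
  assert (Hex2 : ex_series (fun k => INR (S (S k)) * (INR (S (S k)) - 1) * p (S (S k)))).
  { eapply ex_series_ext; [|exact Hex]. intros k; unfold PS_derive.
    rewrite pow1, (S_INR (S k)). match goal with |- ?x = ?y => change (x = y :> R) end; ring. }
  assert (E1 : Series (fun k => INR k * (INR k - 1) * p k) =
     Series (fun k => INR (S (S k)) * (INR (S (S k)) - 1) * p (S (S k)))).
  { rewrite Series_incr_1.
    2:{ apply ex_series_incr_1, ex_series_incr_1. exact Hex2. }
    rewrite Series_incr_1.
    2:{ apply ex_series_incr_1. exact Hex2. }
    change (INR 0) with 0. change (INR 1) with 1. ring. }
  rewrite E1. apply Series_ext. intros k. rewrite pow1, (S_INR (S k)). ring.
Qed.

Definition Gf (a:nat->R) t := exp t * PSeries (PS_derive a) (exp t) / PSeries a (exp t).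
Definition Af (a:nat->R) t := exp t * PSeries (PS_derive a) (exp t)
   + exp t ^ 2 * PSeries (PS_derive (PS_derive a)) (exp t).
Definition G1f a t := Af a t / PSeries a (exp t) - Gf a t ^ 2.
Definition A1f (a:nat->R) t := exp t * PSeries (PS_derive a) (exp t)
   + 3 * exp t ^ 2 * PSeries (PS_derive (PS_derive a)) (exp t)
   + exp t ^ 3 * PSeries (PS_derive (PS_derive (PS_derive a))) (exp t).
Definition G2f a t := A1f a t / PSeries a (exp t)
   - Af a t * (exp t * PSeries (PS_derive a) (exp t)) / (PSeries a (exp t)) ^ 2
   - 2 * Gf a t * G1f a t.
Definition phif a t := ln (PSeries a (exp t)).

Lemma rad_d (a : nat -> R) x : Rbar_lt (Rabs x) (CV_radius a) ->
  Rbar_lt (Rabs x) (CV_radius (PS_derive a)).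
Proof. rewrite CV_radius_derive; auto. Qed.

Lemma Dps (a : nat -> R) x : Rbar_lt (Rabs x) (CV_radius a) ->
  Derive (fun y => PSeries a y) x = PSeries (PS_derive a) x.
Proof. intros; apply Derive_PSeries; auto. Qed.

Lemma exps (a : nat -> R) x : Rbar_lt (Rabs x) (CV_radius a) ->
  ex_derive (fun y => PSeries a y) x.
Proof. intros; apply ex_derive_PSeries; auto. Qed.

Lemma d_phi a t : Rbar_lt (Rabs (exp t)) (CV_radius a) -> 0 < PSeries a (exp t) ->
  is_derive (phif a) t (Gf a t).
Proof.
  intros Hr Hp. unfold phif, Gf. auto_derive.
  - split; [apply exps; auto| split; auto].
  - rewrite Dps by auto. field. lra.
Qed.

Lemma d_G a t : Rbar_lt (Rabs (exp t)) (CV_radius a) -> 0 < PSeries a (exp t) ->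
  is_derive (Gf a) t (G1f a t).
Proof.
  intros Hr Hp. pose proof (rad_d _ _ Hr) as Hr1.
  unfold G1f, Gf, Af. auto_derive.
  - repeat split; try apply exps; auto; lra.
  - rewrite !Dps by auto. field. lra.
Qed.

Lemma d_G1 a t : Rbar_lt (Rabs (exp t)) (CV_radius a) -> 0 < PSeries a (exp t) ->
  is_derive (G1f a) t (G2f a t).
Proof.
  intros Hr Hp. pose proof (rad_d _ _ Hr) as Hr1. pose proof (rad_d _ _ Hr1) as Hr2.
  unfold G2f, G1f, Gf, Af, A1f. auto_derive.
  - repeat split; try apply exps; auto; lra.
  - rewrite !Dps by auto. field. lra.
Qed.

Lemma Rabs_le_i x b : Rabs x <= b -> -b <= x <= b.
Proof. unfold Rabs; destruct Rcase_abs; intros; lra. Qed.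

Lemma divle y a0 : 0 <= y -> 1 <= a0 -> 0 <= y / a0 <= y.
Proof.
  intros Hy Ha. split.
  - unfold Rdiv; apply Rmult_le_pos; [lra| left; apply Rinv_0_lt_compat; lra].
  - unfold Rdiv. rewrite <- (Rmult_1_r y) at 2. apply Rmult_le_compat_l; auto.
    rewrite <- Rinv_1. apply Rinv_le_contravar; lra.
Qed.

Definition Mb rho B := (rho*B+3*rho^2*B+rho^3*B) + (rho*B+rho^2*B)*(rho*B)
   + 2*(rho*B)*((rho*B+rho^2*B) + (rho*B)^2).

Lemma bnd x a0 a1 a2 a3 rho B : 1 <= x <= rho -> 1 <= a0 -> 0<=a1<=B -> 0<=a2<=B -> 0<=a3<=B ->
  Rabs ((x*a1 + 3*x^2*a2 + x^3*a3)/a0 - (x*a1 + x^2*a2)*(x*a1)/a0^2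
        - 2*(x*a1/a0)*((x*a1 + x^2*a2)/a0 - (x*a1/a0)^2)) <= Mb rho B.
Proof.
  intros Hx Ha0 H1 H2 H3.
  assert (hx2 : x^2 <= rho^2) by (apply pow_incr; lra).
  assert (hx3 : x^3 <= rho^3) by (apply pow_incr; lra).
  assert (p2 : 0 <= x^2) by (apply pow_le; lra).
  assert (p3 : 0 <= x^3) by (apply pow_le; lra).
  assert (e1 : 0 <= x*a1 <= rho*B) by (split; nra).
  assert (e2 : 0 <= x^2*a2 <= rho^2*B) by (split; nra).
  assert (e3 : 0 <= x^3*a3 <= rho^3*B) by (split; nra).
  set (A := x*a1 + x^2*a2).
  set (A1 := x*a1 + 3*x^2*a2 + x^3*a3).
  assert (hA : 0 <= A <= rho*B + rho^2*B) by (unfold A; lra).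
  assert (hA1 : 0 <= A1 <= rho*B+3*rho^2*B+rho^3*B) by (unfold A1; lra).
  set (g := x*a1/a0).
  assert (hg : 0 <= g <= rho*B) by (pose proof (divle (x*a1) a0 ltac:(lra) Ha0); unfold g; lra).
  assert (hAd : 0 <= A/a0 <= A) by (apply divle; lra).
  assert (hA1d : 0 <= A1/a0 <= A1) by (apply divle; lra).
  assert (hQ : 0 <= A*(x*a1)/a0^2 <= A*(x*a1)).
  { apply divle. nra. nra. }
  assert (hQ2 : A*(x*a1) <= (rho*B+rho^2*B)*(rho*B)) by (apply Rmult_le_compat; lra).
  set (g1 := A/a0 - g^2).
  assert (hg2 : 0 <= g^2 <= (rho*B)^2) by (split; [apply pow_le; lra| apply pow_incr; lra]).
  assert (hg1 : Rabs g1 <= (rho*B+rho^2*B) + (rho*B)^2) by (unfold g1; apply Rabs_le; lra).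
  assert (hgg : Rabs (2*g*g1) <= 2*(rho*B)*((rho*B+rho^2*B) + (rho*B)^2)).
  { rewrite !Rabs_mult, (Rabs_pos_eq 2) by lra. rewrite (Rabs_pos_eq g) by lra.
    pose proof (Rabs_pos g1). nra. }
  assert (hb : -(2*(rho*B)*((rho*B+rho^2*B) + (rho*B)^2)) <= 2*g*g1 <= 2*(rho*B)*((rho*B+rho^2*B) + (rho*B)^2)).
  { revert hgg. unfold Rabs; destruct Rcase_abs; intros; lra. }
  unfold Mb. apply Rabs_le. lra.
Qed.

Lemma cont_of_derive g g' x : is_derive g x g' -> continuity_pt g x.
Proof. intros H. apply continuity_pt_filterlim. apply (ex_derive_continuous (K:=R_AbsRing) (V:=R_NormedModule)). eexists; eauto. Qed.

Lemma mvt_bound (g g' : R -> R) a b K : a <= b ->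
  (forall x, a <= x <= b -> is_derive g x (g' x)) ->
  (forall x, a <= x <= b -> Rabs (g' x) <= K) -> Rabs (g b - g a) <= K * (b - a).
Proof.
  intros Hab Hd Hb. destruct (Req_dec a b) as [->|Hne].
  - rewrite Rminus_diag, Rabs_R0. pose proof (Hb b ltac:(lra)). pose proof (Rabs_pos (g' b)). nra.
  - destruct (MVT_gen g a b g') as [c [Hc E]].
    + intros x Hx. rewrite Rmin_left, Rmax_right in Hx by lra. apply Hd; lra.
    + intros x Hx. rewrite Rmin_left, Rmax_right in Hx by lra. eapply cont_of_derive, Hd; lra.
    + rewrite Rmin_left, Rmax_right in Hc by lra. rewrite E, Rabs_mult, (Rabs_pos_eq (b-a)) by lra.
      apply Rmult_le_compat_r; [lra| apply Hb; lra].
Qed.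

Lemma Dunique (f : R -> R) x l : is_derive f x l -> Derive (fun y => f y) x = l.
Proof. intros H; apply is_derive_unique; exact H. Qed.

Lemma trap (f f1 f2 f3 : R -> R) u K : 0 <= u ->
  (forall x, 0<=x<=u -> is_derive f x (f1 x) /\ is_derive f1 x (f2 x) /\ is_derive f2 x (f3 x)) ->
  (forall x, 0<=x<=u -> Rabs (f3 x) <= K) -> f 0 = 0 -> f u = 0 ->
  Rabs (u * (f1 0 + f1 u)) <= K * u^3.
Proof.
  intros Hu Hd Hb H0 Hu0.
  assert (HK : 0 <= K) by (pose proof (Hb 0 ltac:(lra)); pose proof (Rabs_pos (f3 0)); lra).
  set (T1 := fun v => f1 0 - f1 v + v * f2 v).
  assert (HT1 : forall v, 0 <= v <= u -> Rabs (T1 v) <= K * u * u).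
  { intros v Hv.
    assert (E : T1 v = T1 v - T1 0) by (unfold T1; ring).
    rewrite E.
    apply Rle_trans with (K * u * (v - 0)); [| replace (v-0) with v by ring; apply Rmult_le_compat_l; [nra|lra]].
    apply (mvt_bound T1 (fun w => w * f3 w)); [lra| |].
    - intros x Hx. destruct (Hd x ltac:(lra)) as [_ [D1 D2]].
      unfold T1. auto_derive.
      + repeat split; eexists; eauto.
      + rewrite (Dunique _ _ _ D1), (Dunique _ _ _ D2). ring.
    - intros x Hx. rewrite Rabs_mult, (Rabs_pos_eq x) by lra.
      pose proof (Hb x ltac:(lra)). pose proof (Rabs_pos (f3 x)). nra. }
  set (T := fun v => v * (f1 0 + f1 v) - 2 * f v).
  assert (E : u * (f1 0 + f1 u) = T u - T 0) by (unfold T; rewrite H0, Hu0; ring).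
  rewrite E. replace (K * u^3) with ((K * u * u) * (u - 0)) by ring.
  apply (mvt_bound T T1); [lra| |exact HT1].
  intros x Hx. destruct (Hd x Hx) as [D0 [D1 _]].
  unfold T, T1. auto_derive.
  - repeat split; eexists; eauto.
  - rewrite (Dunique _ _ _ D1), (Dunique _ _ _ D0). ring.
Qed.

Lemma exists_rho (a : nat -> R) : Rbar_lt 1 (CV_radius a) ->
  exists rho, 1 < rho /\ Rbar_lt rho (CV_radius a).
Proof.
  destruct (CV_radius a) as [r| |]; simpl; intros H.
  - exists ((1+r)/2); split; lra.
  - exists 2; split; auto; lra.
  - contradiction.
Qed.

Lemma X0_ge1 (a : nat -> R) t : (forall k, 0 <= a k) -> PSeries a 1 = 1 -> 0 <= t ->
  Rbar_lt (exp t) (CV_radius a) -> 1 <= PSeries a (exp t).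
Proof.
  intros Ha H1 Ht Hr. rewrite <- H1.
  assert (1 <= exp t) by (rewrite <- exp_0; apply exp_le_3 || (destruct Ht as [Ht|<-]; [left; apply exp_increasing; auto| right; reflexivity])).
  apply (ps_mono a 1 (exp t) Ha); [lra|]. apply (in_rad _ _ (exp t)); [lra|auto].
Qed.

Lemma exp_ge1 t : 0 <= t -> 1 <= exp t.
Proof. intros Ht. rewrite <- exp_0. destruct Ht as [Ht|<-]; [left; apply exp_increasing; auto| right; reflexivity]. Qed.

Lemma analytic (a : nat -> R) : (forall k, 0 <= a k) -> PSeries a 1 = 1 -> Rbar_lt 1 (CV_radius a) ->
 exists U M, 0 < U /\ 0 < M /\ Rbar_lt (exp U) (CV_radius a) /\
 (forall t, 0 <= t <= U -> is_derive (phif a) t (Gf a t) /\ is_derive (Gf a) t (G1f a t)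
      /\ is_derive (G1f a) t (G2f a t)) /\
 (forall t, 0 <= t <= U -> Rabs (G2f a t) <= M) /\
 (forall t, 0 <= t <= U -> Rabs (phif a t - Gf a 0 * t - G1f a 0 * t^2 / 2) <= M * t^3).
Proof.
  intros Ha H1 Hr.
  destruct (exists_rho a Hr) as [rho [Hrho Hrr]].
  set (U := ln rho).
  assert (HU : 0 < U) by (unfold U; rewrite <- ln_1; apply ln_increasing; lra).
  assert (HeU : exp U = rho) by (unfold U; apply exp_ln; lra).
  assert (Hext : forall t, 0 <= t <= U -> 1 <= exp t <= rho).
  { intros t Ht. split; [apply exp_ge1; lra|]. rewrite <- HeU.
    destruct (Req_dec t U) as [->|]; [lra|]. left; apply exp_increasing; lra. }
  pose proof (PSd_nonneg a Ha) as Ha1.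
  pose proof (PSd_nonneg _ Ha1) as Ha2.
  pose proof (PSd_nonneg _ Ha2) as Ha3.
  set (B := PSeries a rho + PSeries (PS_derive a) rho + PSeries (PS_derive (PS_derive a)) rho
          + PSeries (PS_derive (PS_derive (PS_derive a))) rho).
  assert (Hrad : forall t, 0 <= t <= U -> Rbar_lt (Rabs (exp t)) (CV_radius a)).
  { intros t Ht. apply (in_rad _ _ rho); [pose proof (Hext t Ht); lra|auto]. }
  assert (Hrho' : Rbar_lt (Rabs rho) (CV_radius a)) by (apply (in_rad _ _ rho); [lra|auto]).
  assert (Hr1 : Rbar_lt (Rabs rho) (CV_radius (PS_derive a))) by (rewrite CV_radius_derive; auto).
  assert (Hr2 : Rbar_lt (Rabs rho) (CV_radius (PS_derive (PS_derive a)))) by (rewrite !CV_radius_derive; auto).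
  assert (Hr3 : Rbar_lt (Rabs rho) (CV_radius (PS_derive (PS_derive (PS_derive a))))) by (rewrite !CV_radius_derive; auto).
  assert (HB0 : forall t, 0 <= t <= U -> 0 <= PSeries a (exp t) <= PSeries a rho)
    by (intros t Ht; apply ps_mono; auto; pose proof (Hext t Ht); lra).
  assert (HB1 : forall t, 0 <= t <= U -> 0 <= PSeries (PS_derive a) (exp t) <= PSeries (PS_derive a) rho)
    by (intros t Ht; apply ps_mono; auto; pose proof (Hext t Ht); lra).
  assert (HB2 : forall t, 0 <= t <= U -> 0 <= PSeries (PS_derive (PS_derive a)) (exp t) <= PSeries (PS_derive (PS_derive a)) rho)
    by (intros t Ht; apply ps_mono; auto; pose proof (Hext t Ht); lra).
  assert (HB3 : forall t, 0 <= t <= U -> 0 <= PSeries (PS_derive (PS_derive (PS_derive a))) (exp t) <= PSeries (PS_derive (PS_derive (PS_derive a))) rho)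
    by (intros t Ht; apply ps_mono; auto; pose proof (Hext t Ht); lra).
  assert (HX0 : forall t, 0 <= t <= U -> 1 <= PSeries a (exp t)).
  { intros t Ht. apply X0_ge1; auto; [lra|].
    eapply Rbar_le_lt_trans; [|exact Hrr]. simpl. pose proof (Hext t Ht); lra. }
  assert (Hd : forall t, 0 <= t <= U -> is_derive (phif a) t (Gf a t) /\ is_derive (Gf a) t (G1f a t)
      /\ is_derive (G1f a) t (G2f a t)).
  { intros t Ht. pose proof (HX0 t Ht). split; [|split].
    - apply d_phi; [auto|lra]. - apply d_G; [auto|lra]. - apply d_G1; [auto|lra]. }
  set (M := Mb rho B + 1).
  assert (HM : forall t, 0 <= t <= U -> Rabs (G2f a t) <= Mb rho B).
  { intros t Ht. unfold G2f, G1f, Gf, Af, A1f.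
    pose proof (HB0 t Ht). pose proof (HB1 t Ht). pose proof (HB2 t Ht). pose proof (HB3 t Ht).
    pose proof (HB0 0 ltac:(lra)). pose proof (HB1 0 ltac:(lra)).
    pose proof (HB2 0 ltac:(lra)). pose proof (HB3 0 ltac:(lra)). rewrite exp_0 in *.
    apply bnd; auto; unfold B; lra. }
  assert (HMpos : 0 <= Mb rho B).
  { pose proof (HM 0 ltac:(lra)). pose proof (Rabs_pos (G2f a 0)). lra. }
  exists U, M. split; [auto|]. split; [unfold M; lra|]. split; [rewrite HeU; auto|].
  split; [exact Hd|]. split; [intros t Ht; pose proof (HM t Ht); unfold M; lra|].
  intros t Ht.
  set (mu := Gf a 0). set (sg := G1f a 0).
  assert (T1 : forall w, 0 <= w <= t -> Rabs (G1f a w - sg) <= M * w).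
  { intros w Hw. unfold sg. replace (M * w) with (M * (w - 0)) by ring.
    apply (mvt_bound (G1f a) (G2f a)); [lra| |].
    - intros x Hx; apply Hd; lra.
    - intros x Hx; pose proof (HM x ltac:(lra)); unfold M; lra. }
  assert (T2 : forall w, 0 <= w <= t -> Rabs (Gf a w - mu - sg * w) <= M * w^2).
  { intros w Hw.
    replace (Gf a w - mu - sg * w) with ((Gf a w - sg * w) - (Gf a 0 - sg * 0)) by (unfold mu; ring).
    replace (M * w^2) with ((M * w) * (w - 0)) by ring.
    apply (mvt_bound (fun y => Gf a y - sg * y) (fun y => G1f a y - sg)); [lra| |].
    - intros x Hx. destruct (Hd x ltac:(lra)) as [_ [Dx _]].
      auto_derive. eexists; eauto. rewrite (Dunique _ _ _ Dx). ring.
    - intros x Hx. pose proof (T1 x ltac:(lra)). assert (M * x <= M * w) by (apply Rmult_le_compat_l; unfold M; lra). lra. }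
  assert (Hphi0 : phif a 0 = 0) by (unfold phif; rewrite exp_0, H1, ln_1; auto).
  replace (phif a t - mu * t - sg * t ^ 2 / 2) with
     ((phif a t - mu * t - sg * t ^ 2 / 2) - (phif a 0 - mu * 0 - sg * 0 ^ 2 / 2)) by (rewrite Hphi0; field).
  replace (M * t^3) with ((M * t^2) * (t - 0)) by ring.
  apply (mvt_bound (fun y => phif a y - mu * y - sg * y^2/2) (fun y => Gf a y - mu - sg * y)); [lra| |].
  - intros x Hx. destruct (Hd x ltac:(lra)) as [Dx _].
    auto_derive. eexists; eauto. rewrite (Dunique _ _ _ Dx). field.
  - intros x Hx. pose proof (T2 x Hx). assert (M * x^2 <= M * t^2).
    { apply Rmult_le_compat_l; [unfold M; lra|]. apply pow_incr; lra. } lra.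
Qed.

Lemma Cpow_R x k : Cpow (RtoC x) k = RtoC (x ^ k).
Proof. rewrite RtoC_pow. reflexivity. Qed.

Lemma pgf_R p x : pgf p (RtoC x) = RtoC (PSeries p x).
Proof.
  unfold pgf, PSeries. rewrite (Series_zero (fun k => p k * snd (Cpow (RtoC x) k))).
  - unfold RtoC at 2. f_equal. apply Series_ext. intros k. rewrite Cpow_R. reflexivity.
  - intros k. rewrite Cpow_R. simpl. ring.
Qed.

Lemma pgfd_R p x : pgf_deriv p (RtoC x) = RtoC (PSeries (PS_derive p) x).
Proof.
  unfold pgf_deriv, PSeries, PS_derive.
  rewrite (Series_zero (fun k => INR (S k) * p (S k) * snd (Cpow (RtoC x) k))).
  - unfold RtoC at 2. f_equal. apply Series_ext. intros k. rewrite Cpow_R. reflexivity.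
  - intros k. rewrite Cpow_R. simpl. ring.
Qed.

Lemma pow_lt_strict a b n : 0 <= a < b -> (1 <= n)%nat -> a^n < b^n.
Proof.
  intros Hab Hn. destruct n as [|n]; [lia|]. simpl.
  pose proof (pow_incr a b n ltac:(lra)). pose proof (pow_le a n ltac:(lra)).
  assert (0 < b^n) by (apply pow_lt; lra). nra.
Qed.

Lemma exp_pow_nat t k : exp t ^ k = exp (INR k * t).
Proof.
  rewrite <- (exp_ln (exp t ^ k)) by (apply pow_lt, exp_pos).
  rewrite ln_pow by apply exp_pos. rewrite ln_exp. reflexivity.
Qed.

Lemma ln_pow_eq y k : 0 < y -> y ^ k = exp (INR k * ln y).
Proof. intros Hy. rewrite <- (exp_ln y) at 1 by auto. apply exp_pow_nat. Qed.

Lemma real_root p (s n : nat) t :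
  INR n * phif p t - INR s * t = 0 -> 0 < PSeries p (exp t) ->
  Cpow (RtoC (exp t)) s = Cpow (pgf p (RtoC (exp t))) n.
Proof.
  intros H Hp. rewrite pgf_R, !Cpow_R. f_equal.
  rewrite exp_pow_nat, ln_pow_eq by auto. f_equal. unfold phif in H. lra.
Qed.

Lemma root_between p (n s : nat) a b : (forall k, 0 <= p k) -> PSeries p 1 = 1 ->
  0 <= a < b -> Rbar_lt (exp b) (CV_radius p) ->
  INR n * phif p a - INR s * a < 0 -> 0 < INR n * phif p b - INR s * b ->
  exists t, a < t < b /\ Cpow (RtoC (exp t)) s = Cpow (pgf p (RtoC (exp t))) n.
Proof.
  intros Ha H1 Hab Hb Hfa Hfb.
  assert (Hin : forall t, a <= t <= b -> Rbar_lt (Rabs (exp t)) (CV_radius p) /\ 1 <= PSeries p (exp t)).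
  { intros t Ht. assert (exp t <= exp b).
    { destruct (Req_dec t b) as [->|]; [lra|]. left; apply exp_increasing; lra. }
    split.
    - rewrite Rabs_pos_eq by (left; apply exp_pos). eapply Rbar_le_lt_trans; [|exact Hb]. simpl; lra.
    - apply X0_ge1; auto; [lra|]. eapply Rbar_le_lt_trans; [|exact Hb]. simpl; lra. }
  destruct (Ranalysis5.IVT_interv (fun t => INR n * phif p t - INR s * t) a b) as [t [Ht Hft]]; auto.
  - intros t Ht. destruct (Hin t Ht) as [Hr Hp].
    apply (cont_of_derive _ (INR n * Gf p t - INR s)).
    pose proof (d_phi p t Hr ltac:(lra)) as Dp.
    auto_derive. eexists; eauto. rewrite (Dunique _ _ _ Dp). ring.
  - lra.
  - exists t. simpl in Hft. split.
    + split; destruct Ht as [[Ht1|Ht1] [Ht2|Ht2]]; subst; lra.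
    + apply real_root; auto. destruct (Hin t ltac:(lra)); lra.
Qed.

Theorem lemma3p3 :
  forall p : nat -> R,
    is_pmf p ->
    Rbar_lt 1 (CV_radius p) ->
    0 < pgf_mean p ->
    0 < pgf_var p ->
    (forall (r1 : R) (z : C), 0 < r1 -> Rbar_lt r1 (CV_radius p) ->
        Cmod z = r1 -> z <> RtoC r1 -> Cmod (pgf p z) < pgfR p r1) ->
  forall gamma1 gamma2 : R, 0 < gamma1 -> gamma1 <= gamma2 ->
  exists (K : R) (S0 : nat),
    forall (s n : nat) (Z0 : C),
      (S0 <= s)%nat -> (1 <= s)%nat -> (1 <= n)%nat ->
      INR n * pgf_mean p < INR s ->
      pgf_deg_gt p (INR s / INR n) ->
      gamma1 <= (1 - INR n * pgf_mean p / INR s) * sqrt (INR s) <= gamma2 ->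
      Cpow Z0 s = Cpow (pgf p Z0) n ->
      1 < Cmod Z0 -> Rbar_lt (Cmod Z0) (CV_radius p) ->
      (forall z : C, Cpow z s = Cpow (pgf p z) n ->
          1 < Cmod z -> Rbar_lt (Cmod z) (CV_radius p) -> Cmod Z0 <= Cmod z) ->
      exists E : C,
        Cdiv (Copp (RtoC (INR s - INR n * pgf_mean p)))
             (Cminus (Cmult (RtoC (INR s)) (Cpow Z0 (s - 1)))
                     (Cmult (Cmult (RtoC (INR n)) (Cpow (pgf p Z0) (n - 1)))
                            (pgf_deriv p Z0)))
        = Cmult (Cpow (Cinv Z0) (s - 1)) (Cplus 1 E)
        /\ Cmod E <= K / sqrt (INR s).
Proof.
  intros p Hpmf Hr Hmu Hvar Hmod gamma1 gamma2 Hg1 Hg12.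
  destruct Hpmf as [Ha Hser].
  assert (H1 : PSeries p 1 = 1).
  { unfold PSeries. transitivity (Series p); [apply Series_ext; intros k; rewrite pow1; ring|]. apply is_series_unique; auto. }
  destruct (analytic p Ha H1 Hr) as [U [M [HU [HM [HeU [Hd [HM2 HT]]]]]]].
  assert (Emu : pgf_mean p = Gf p 0).
  { unfold Gf, pgf_mean. rewrite exp_0, H1, mean_eq by auto. field. }
  assert (Esg : pgf_var p = G1f p 0).
  { unfold G1f, Af, Gf, pgf_var, pgf_mean. rewrite exp_0, H1, mean_eq, var_eq by auto. field. }
  assert (Hphi0 : phif p 0 = 0) by (unfold phif; rewrite exp_0, H1, ln_1; auto).
  set (mu := Gf p 0) in *. set (sg := G1f p 0) in *.
  rewrite Esg in Hvar. rewrite Emu in Hmu.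
  set (C0 := 32 * M * mu * gamma2^2 / sg^2).
  assert (Hgam2 : 0 < gamma2^2) by (apply pow_lt; lra).
  assert (Hsg2 : 0 < sg^2) by (apply pow_lt; lra).
  assert (HC0 : 0 < C0).
  { unfold C0. apply Rdiv_lt_0_compat. 2: lra.
    assert (0 < 32*M) by lra. assert (0 < 32*M*mu) by nra. nra. }
  set (L := 2*gamma2 + 32*M*mu*gamma2/sg^2 + 8*mu*gamma2/(sg*U) + 2*C0/gamma1 + 1).
  assert (Hg2 : 0 < gamma2) by lra.
  assert (HL1 : 0 < 32*M*mu*gamma2/sg^2).
  { apply Rdiv_lt_0_compat; [|lra]. assert (0 < 32*M) by lra. assert (0 < 32*M*mu) by nra. nra. }
  assert (HL2 : 0 < 8*mu*gamma2/(sg*U)).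
  { apply Rdiv_lt_0_compat; [|nra]. assert (0 < 8*mu) by lra. nra. }
  assert (HL3 : 0 < 2*C0/gamma1) by (apply Rdiv_lt_0_compat; lra).
  assert (HL0 : 0 < L) by (unfold L; lra).
  destruct (INR_unbounded (L^2)) as [S0 HS0].
  exists (2*C0/gamma1), S0.
  intros s n Z0 HsS0 Hs1 Hn1 Hnmu Hdeg Hgam HZ0 HZ1 HZr Hmin.
  rewrite Emu in *.
  assert (HsR : INR S0 <= INR s) by (apply le_INR; lia).
  assert (Hs1R : 1 <= INR s) by (change 1 with (INR 1); apply le_INR; lia).
  set (w := sqrt (INR s)) in *.
  assert (Hww : w * w = INR s) by (apply sqrt_sqrt, pos_INR).
  assert (Hw : L < w).
  { rewrite <- (sqrt_pow2 L) by lra. unfold w. apply sqrt_lt_1_alt. split; [apply pow_le; lra| lra]. }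
  assert (ltdiv : forall c d, 0 < d -> c / d < w -> c < w * d).
  { intros c d Hd' Hc. replace c with ((c/d)*d) by (field; lra). apply Rmult_lt_compat_r; lra. }
  assert (Hw1 : 2*gamma2 < w) by (unfold L in Hw; lra).
  assert (Hw2 : 32*M*mu*gamma2 < w * sg^2) by (apply ltdiv; [lra| unfold L in Hw; lra]).
  assert (Hw3 : 8*mu*gamma2 < w * (sg*U)) by (apply ltdiv; [nra| unfold L in Hw; lra]).
  assert (Hw4 : 2*C0 < w * gamma1) by (apply ltdiv; [lra| unfold L in Hw; lra]).
  assert (Hwpos : 0 < w) by lra.
  set (dl := INR s - INR n * mu).
  assert (Hdl : gamma1 * w <= dl <= gamma2 * w).
  { assert (E : (1 - INR n * mu / INR s) * w * w = dl).
    { unfold dl. rewrite Rmult_assoc, Hww. field. lra. }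
    rewrite <- E. split; apply Rmult_le_compat_r; lra. }
  assert (Hnmu2 : w*w <= 2 * (INR n * mu)).
  { assert (0 <= w*(w-2*gamma2)) by (apply Rmult_le_pos; lra). unfold dl in Hdl. nra. }
  assert (Hnm : 0 < INR n * mu) by nra.
  assert (Hnpos : 0 < INR n) by (pose proof (pos_INR n); destruct (Req_dec (INR n) 0) as [E|]; [rewrite E in Hnm; lra| lra]).
  set (q := dl / INR n).
  assert (Hq : dl = INR n * q) by (unfold q; field; lra).
  assert (Hdlpos : 0 < dl) by nra.
  assert (Hqpos : 0 < q) by (unfold q; apply Rdiv_lt_0_compat; lra).
  assert (Hqw : q * w <= 2*mu*gamma2).
  { apply (Rmult_le_reg_r (INR n * mu)); [lra|].
    assert (E1 : q*w*(INR n*mu) = dl*(w*mu)) by (rewrite Hq; ring).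
    assert (E2 : dl*(w*mu) <= (gamma2*w)*(w*mu)) by (apply Rmult_le_compat_r; nra).
    assert (E3 : (gamma2*mu)*(w*w) <= (gamma2*mu)*(2*(INR n*mu))) by (apply Rmult_le_compat_l; nra).
    nra. }
  assert (Hk1 : 16 * M * q < sg^2).
  { apply (Rmult_lt_reg_r w); [lra|].
    assert (16*M*(q*w) <= 16*M*(2*mu*gamma2)) by (apply Rmult_le_compat_l; lra).
    nra. }
  assert (Hk2 : 4 * q < U * sg).
  { apply (Rmult_lt_reg_r w); [lra|].
    assert (4*(q*w) <= 4*(2*mu*gamma2)) by (apply Rmult_le_compat_l; lra).
    nra. }
  set (ta := q / sg). set (t1 := 4 * q / sg).
  assert (Hta : ta * sg = q) by (unfold ta; field; lra).
  assert (Ht1 : t1 * sg = 4 * q) by (unfold t1; field; lra).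
  assert (Htapos : 0 < ta) by (unfold ta; apply Rdiv_lt_0_compat; lra).
  assert (Htat1 : ta < t1) by (apply (Rmult_lt_reg_r sg); lra).
  assert (Ht1U : t1 < U) by (apply (Rmult_lt_reg_r sg); lra).
  assert (Hs_eq : INR s = INR n * mu + INR n * q) by (unfold dl in Hq; lra).
  assert (Hfneg : forall t, 0 < t <= ta -> INR n * phif p t - INR s * t < 0).
  { intros t Ht. pose proof (HT t ltac:(lra)) as HTt. apply Rabs_le_i in HTt.
    assert (h1 : t * sg <= q) by (rewrite <- Hta; apply Rmult_le_compat_r; lra).
    assert (h2 : (t*sg)^2 <= q^2) by (apply pow_incr; nra).
    assert (h3 : 16*M*q*q < sg^2*q) by (apply Rmult_lt_compat_r; lra).
    assert (h4 : 16*M*t^2 < q).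
    { apply (Rmult_lt_reg_r (sg^2)); [lra|].
      assert (M*(t*sg)^2 <= M*q^2) by (apply Rmult_le_compat_l; lra). nra. }
    assert (h5 : sg*t/2 + M*t^2 - q < 0) by nra.
    assert (h6 : INR n * phif p t <= INR n * (mu*t + sg*t^2/2 + M*t^3)) by (apply Rmult_le_compat_l; lra).
    assert (h7 : INR n * t * (sg*t/2 + M*t^2 - q) < 0).
    { assert (0 < INR n * t) by nra. nra. }
    rewrite Hs_eq. nra. }
  assert (Hfpos : 0 < INR n * phif p t1 - INR s * t1).
  { pose proof (HT t1 ltac:(lra)) as HTt. apply Rabs_le_i in HTt.
    assert (h3 : 16*M*q*q < sg^2*q) by (apply Rmult_lt_compat_r; lra).
    assert (h4 : M*t1^2 < q).
    { apply (Rmult_lt_reg_r (sg^2)); [lra|].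
      replace (M*t1^2*sg^2) with (M*(t1*sg)^2) by ring. rewrite Ht1. nra. }
    assert (h6 : INR n * (mu*t1 + sg*t1^2/2 - M*t1^3) <= INR n * phif p t1) by (apply Rmult_le_compat_l; lra).
    assert (h7 : 0 < INR n * t1 * (q - M*t1^2)).
    { assert (0 < INR n * t1) by nra. nra. }
    assert (E : sg * t1^2 = 4*q*t1) by (rewrite <- Ht1; ring).
    rewrite Hs_eq. nra. }
  assert (Hroot : forall t, 0 < t -> Rbar_lt (exp t) (CV_radius p) ->
     Cpow (RtoC (exp t)) s = Cpow (pgf p (RtoC (exp t))) n -> Cmod Z0 <= exp t).
  { intros t Ht Hrt Hrt'.
    assert (Hc : Cmod (RtoC (exp t)) = exp t) by (rewrite Cmod_R; apply Rabs_pos_eq; left; apply exp_pos).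
    assert (1 < exp t) by (rewrite <- exp_0; apply exp_increasing; lra).
    rewrite <- Hc. apply Hmin; auto; rewrite Hc; auto. }
  set (x0 := Cmod Z0) in *.
  assert (HX0x : 1 <= PSeries p x0).
  { rewrite <- (exp_ln x0) by lra. apply X0_ge1; auto.
    - left; rewrite <- ln_1; apply ln_increasing; lra.
    - rewrite exp_ln by lra; auto. }
  assert (HZreal : Z0 = RtoC x0).
  { destruct (classic (Z0 = RtoC x0)) as [E|Hne]; [exact E|]. exfalso.
    pose proof (Hmod x0 Z0 ltac:(lra) HZr eq_refl Hne) as Hlt.
    change (pgfR p x0) with (PSeries p x0) in Hlt.
    assert (Hp1 : x0 ^ s < PSeries p x0 ^ n).
    { unfold x0 at 1. rewrite <- Cmod_pow, HZ0, Cmod_pow.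
      apply pow_lt_strict; [split; [apply Cmod_ge_0|exact Hlt] | lia]. }
    set (T := ln x0).
    assert (HTpos : 0 < T) by (unfold T; rewrite <- ln_1; apply ln_increasing; lra).
    assert (HeT : exp T = x0) by (unfold T; apply exp_ln; lra).
    assert (HfT : 0 < INR n * phif p T - INR s * T).
    { unfold phif. rewrite HeT.
      assert (Hl : ln (x0^s) < ln (PSeries p x0 ^ n)) by (apply ln_increasing; [apply pow_lt; lra| exact Hp1]).
      rewrite !ln_pow in Hl by lra. unfold T. lra. }
    destruct (Rle_lt_dec T ta) as [Hle|Hlt2].
    - pose proof (Hfneg T ltac:(lra)). lra.
    - destruct (root_between p n s ta T Ha H1 ltac:(lra) ltac:(rewrite HeT; exact HZr)
         (Hfneg ta ltac:(lra)) HfT) as [t [Ht Hrt]].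
      assert (exp t < x0) by (rewrite <- HeT; apply exp_increasing; lra).
      assert (Rbar_lt (exp t) (CV_radius p)) by (eapply Rbar_le_lt_trans; [|exact HZr]; simpl; lra).
      pose proof (Hroot t ltac:(lra) ltac:(assumption) Hrt). lra. }
  assert (HexpU : Rbar_lt (exp t1) (CV_radius p)).
  { eapply Rbar_le_lt_trans; [|exact HeU]. simpl. left; apply exp_increasing; lra. }
  destruct (root_between p n s ta t1 Ha H1 ltac:(lra) HexpU (Hfneg ta ltac:(lra)) Hfpos)
    as [ts [Hts Hrts]].
  assert (Hx0le : x0 <= exp ts).
  { apply Hroot; auto; [lra|]. eapply Rbar_le_lt_trans; [|exact HexpU]. simpl. left; apply exp_increasing; lra. }
  set (u := ln x0).
  assert (Hupos : 0 < u) by (unfold u; rewrite <- ln_1; apply ln_increasing; lra).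
  assert (Heu : exp u = x0) by (unfold u; apply exp_ln; lra).
  assert (Hut1 : u < t1).
  { assert (u <= ts) by (unfold u; rewrite <- (ln_exp ts); apply ln_le; lra). lra. }
  rewrite HZreal in HZ0. rewrite pgf_R, !Cpow_R in HZ0. apply (f_equal fst) in HZ0. simpl in HZ0.
  assert (Hfu : INR n * phif p u - INR s * u = 0).
  { unfold phif. rewrite Heu. apply (f_equal ln) in HZ0. rewrite !ln_pow in HZ0 by lra. unfold u; lra. }
  pose proof (trap (fun t => INR n * phif p t - INR s * t) (fun t => INR n * Gf p t - INR s)
     (fun t => INR n * G1f p t) (fun t => INR n * G2f p t) u (INR n * M)) as Htr.
  simpl in Htr.
  assert (Htr2 : Rabs (u * (INR n * mu - INR s + (INR n * Gf p u - INR s))) <= INR n * M * u ^ 3).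
  { apply Htr.
    - lra.
    - intros x Hx. destruct (Hd x ltac:(lra)) as [D0 [D1 D2]]. split; [|split].
      + auto_derive. eexists; eauto. rewrite (Dunique _ _ _ D0). ring.
      + auto_derive. eexists; eauto. rewrite (Dunique _ _ _ D1). ring.
      + auto_derive. eexists; eauto. rewrite (Dunique _ _ _ D2). ring.
    - intros x Hx. rewrite Rabs_mult, (Rabs_pos_eq (INR n)) by lra.
      apply Rmult_le_compat_l; [lra| apply HM2; lra].
    - rewrite Hphi0. ring.
    - exact Hfu. }
  clear Htr.
  set (D := INR n * Gf p u - INR s) in *.
  assert (Hbnd : Rabs (D - dl) <= INR n * M * u^2).
  { replace (INR n * mu - INR s + D) with (D - dl) in Htr2 by (unfold dl; ring).
    rewrite Rabs_mult, (Rabs_pos_eq u) in Htr2 by lra.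
    apply (Rmult_le_reg_l u); [lra|]. replace (u * (INR n * M * u^2)) with (INR n * M * u^3) by ring. lra. }
  assert (HDC : Rabs (D - dl) <= C0).
  { assert (hA : dl * q <= 2*mu*gamma2^2).
    { apply (Rmult_le_reg_r w); [lra|].
      assert (dl * (q*w) <= dl * (2*mu*gamma2)) by (apply Rmult_le_compat_l; lra).
      assert (dl * (2*mu*gamma2) <= (gamma2*w) * (2*mu*gamma2)) by (apply Rmult_le_compat_r; nra).
      nra. }
    assert (hB : INR n*M*t1^2*sg^2 = 16*M*dl*q).
    { replace (INR n*M*t1^2*sg^2) with (INR n*M*(t1*sg)^2) by ring. rewrite Ht1, Hq. ring. }
    assert (hC : C0 * sg^2 = 32*M*mu*gamma2^2) by (unfold C0; field; lra).
    assert (hD : INR n * M * u^2 <= INR n * M * t1^2).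
    { apply Rmult_le_compat_l; [nra|]. apply pow_incr; lra. }
    assert (hE : INR n * M * t1^2 <= C0).
    { apply (Rmult_le_reg_r (sg^2)); [lra|]. rewrite hB, hC.
      assert (16*M*(dl*q) <= 16*M*(2*mu*gamma2^2)) by (apply Rmult_le_compat_l; lra). nra. }
    lra. }
  assert (HD : dl / 2 <= D).
  { apply Rabs_le_i in HDC. assert (2*C0 < dl) by nra. lra. }
  exists (RtoC (dl / D - 1)). split.
  - rewrite HZreal.
    assert (Hx0n : x0 <> 0) by lra.
    assert (HDn : D <> 0) by lra.
    assert (HX0n : PSeries p x0 <> 0) by lra.
    destruct s as [|s']; [lia|]. destruct n as [|n']; [lia|].
    replace (S s' - 1)%nat with s' by lia. replace (S n' - 1)%nat with n' by lia.
    simpl in HZ0.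
    rewrite <- (RtoC_inv x0) by exact Hx0n.
    rewrite pgf_R, pgfd_R, !Cpow_R.
    assert (Eden : INR (S s') * x0 ^ s' - INR (S n') * PSeries p x0 ^ n' * PSeries (PS_derive p) x0
                   = - (x0 ^ s' * D)).
    { unfold D, Gf. rewrite Heu.
      replace (PSeries p x0 ^ n') with (x0 * x0 ^ s' / PSeries p x0) by (rewrite HZ0; field; exact HX0n).
      field. exact HX0n. }
    assert (Hpx : x0 ^ s' <> 0) by (apply pow_nonzero; exact Hx0n).
    rewrite <- !RtoC_mult, <- RtoC_minus, <- RtoC_opp, <- RtoC_plus, <- RtoC_mult.
    rewrite Eden. rewrite <- RtoC_div.
    2:{ intros Hc. apply Ropp_eq_0_compat in Hc. rewrite Ropp_involutive in Hc.
        apply Rmult_integral in Hc. destruct Hc; auto. }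
    f_equal. rewrite pow_inv. field. split; auto.
  - rewrite Cmod_R.
    assert (Habs : Rabs (dl / D - 1) * D = Rabs (dl - D)).
    { replace (dl - D) with ((dl/D - 1) * D) by (field; lra).
      rewrite Rabs_mult, (Rabs_pos_eq D) by lra. ring. }
    assert (Hm : Rabs (dl - D) <= C0) by (rewrite Rabs_minus_sym; exact HDC).
    assert (Hm2 : Rabs (dl / D - 1) * (gamma1 * w) <= 2 * C0).
    { pose proof (Rabs_pos (dl / D - 1)).
      assert (Rabs (dl / D - 1) * (gamma1 * w) <= Rabs (dl / D - 1) * (2 * D)) by (apply Rmult_le_compat_l; lra).
      nra. }
    replace (2 * C0 / gamma1 / w) with (2 * C0 / (gamma1 * w)) by (field; lra).
    apply (Rmult_le_reg_r (gamma1 * w)); [nra|]. replace (2 * C0 / (gamma1 * w) * (gamma1 * w)) with (2*C0) by (field; nra).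
    exact Hm2.
Qed.
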